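(* Let $m\ge 2$ be an integer and $\alpha\in(0,1)$. There exists a nonzero finite Borel measure $\mu$ on $\mathbb{T}$ such that $\operatorname{ess\,sup}_{x} \Theta^{\alpha,*}(\mu,x)<\infty$, $\operatorname{ess\,inf}_{x}\Theta_{\alpha,*}(\mu,x)>0$ (essential supremum/infimum with respect to $\mu$), and $$\mathcal{C}(\mu,\alpha) \leq \frac{\lceil m^{\alpha}\rceil}{\lfloor m^{\alpha}\rfloor}.$$
   Context: Fix an integer $m\ge 2$ and let $\mathbb{T}=\{0,1,\dots,m-1\}^{\mathbb{N}}$ be the set of infinite sequences with entries in $\{0,\dots,m-1\}$. For distinct $a,b\in\mathbb{T}$ let $n(a,b)$ be the first index at which they differ and set $d(a,b)=m^{-n(a,b)+1}$ ($d(a,a)=0$). For an integer $n\ge0$ and $x\in\mathbb{T}$, $B_n(x)=B(x,m^{-n})$ is the set of sequences agreeing with $x$ in the first $n$ positions (an interval of level $n$). For a Borel measure $\mu$ on $\mathbb{T}$ and $\alpha>0$: $\Theta^{\alpha,*}(\mu,x)=\limsup_{n\to\infty} m^{\alpha n}\mu(B_n(x))$ and $\Theta_{\alpha,*}(\mu,x)=\liminf_{n\to\infty} m^{\alpha n}\mu(B_n(x))$. Define $\mathcal{C}(\mu,\alpha)=\dfrac{\operatorname{ess\,sup}_{x\in\mathbb{T}}\Theta^{\alpha,*}(\mu,x)}{\operatorname{ess\,inf}_{x\in\mathbb{T}}\Theta_{\alpha,*}(\mu,x)}$ (with respect to $\mu$) whenever the numerator is finite and the denominator positive. $\lfloor\cdot\rfloor,\lceil\cdot\rceil$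 denote floor and ceiling. *)

(* Defs.v *)
From HB Require Import structures.
From mathcomp Require Import all_boot all_order all_algebra.
From mathcomp Require Import all_classical all_reals all_analysis.
From mathcomp Require Import ess_sup_inf.
Set Implicit Arguments. Unset Strict Implicit. Unset Printing Implicit Defensive.
Import Order.TTheory GRing.Theory Num.Theory.
Import numFieldNormedType.Exports.
Local Open Scope classical_set_scope.
Local Open Scope ring_scope.

(* We use 'I_(m.-2.+2), which is literally 'I_m
   whenever m >= 2 (the only case used); the .-2.+2 makes the type
   nonempty for every m so that T is a pointedType, as required by
   the measure-theory library. *)
Definition digit (m : nat) := 'I_(m.-2.+2).
HB.instance Definition _ (m : nat) := Choice.copy (digit m) 'I_(m.-2.+2).
HB.instance Definition _ (m : nat) := isPointed.Build (digit m) ord0.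

Notation seqT m := (nat -> digit m).

Definition Bn (m : nat) (n : nat) (x : seqT m) : set (seqT m) :=
  [set y | forall i, (i < n)%N -> y i = x i].

(* Open sets for the metric d(a,b) = m^{-n(a,b)+1}: every point has a
   ball B_n(x) contained in the set (the balls of d are exactly the B_n). *)
Definition openT (m : nat) : set (set (seqT m)) :=
  [set U | forall x, U x -> exists n, Bn n x `<=` U].

Notation borelT m := (g_sigma_algebraType (@openT m)).

Local Open Scope ereal_scope.

Definition Theta_up {R : realType} (m : nat) (mu : set (borelT m) -> \bar R)
    (alpha : R) (x : borelT m) : \bar R :=
  limn_esup (fun n : nat => ((m%:R `^ (alpha * n%:R))%:E * mu (@Bn m n x))%E).

Definition Theta_low {R : realType} (m : nat) (mu : set (borelT m) -> \bar R)
    (alpha : R) (x : borelT m) : \bar R :=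
  limn_einf (fun n : nat => ((m%:R `^ (alpha * n%:R))%:E * mu (@Bn m n x))%E).

(* C(mu, alpha) = ess sup Theta^{alpha,*} / ess inf Theta_{alpha,*}
   (meaningful when the numerator is finite and the denominator positive). *)
Definition Cratio {R : realType} (m : nat)
    (mu : {measure set (borelT m) -> \bar R}) (alpha : R) : R :=
  (fine (ess_sup mu (Theta_up mu alpha)) / fine (ess_inf mu (Theta_low mu alpha)))%R.

(* Main.v *)
Require Import Defs.
From HB Require Import structures.
From mathcomp Require Import all_boot all_order all_algebra.
From mathcomp Require Import all_classical all_reals all_analysis.
From mathcomp Require Import ess_sup_inf.
From mathcomp Require Import zify ring lra.
Import Order.TTheory GRing.Theory Num.Theory.
Import numFieldNormedType.Exports.
Local Open Scope classical_set_scope.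
Local Open Scope ring_scope.

Lemma euclid_uniq (k a b : int) (d e : int) : 0 < k -> 0 <= d < k -> 0 <= e < k ->
  k * a + d = k * b + e -> a = b /\ d = e.
Proof.
move=> k0 /andP[d0 dk] /andP[e0 ek] h.
case: (ltgtP a b) => ab.
- have : k * (a + 1) <= k * b by rewrite ler_pM2l // lezD1.
  lia.
- have : k * (b + 1) <= k * a by rewrite ler_pM2l // lezD1.
  lia.
- subst; lia.
Qed.
Search countable int.

Section Gen.
Variables (R : realType) (m : nat) (k : nat -> nat).
Hypothesis hm : (2 <= m)%N.
Hypothesis hk0 : forall i, (0 < k i)%N.
Hypothesis hkm : forall i, (k i <= m)%N.

Definition PP n : nat := \prod_(i < n) k i.
Definition gg n (t : R) : int := Num.floor ((PP n)%:R * t).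
Definition dig n (t : R) : nat := absz (gg n.+1 t - (k n)%:Z * gg n t)%R.
Definition ff (t : R) : seqT m := fun n => inord (dig n t).

Lemma PPS n : PP n.+1 = (PP n * k n)%N.
Proof. by rewrite /PP big_ord_recr. Qed.

Lemma PP_gt0 n : (0 < PP n)%N.
Proof. by rewrite /PP prodn_gt0. Qed.

Lemma gg_step n t : gg n.+1 t = (k n)%:Z * gg n t + (dig n t)%:Z /\ (dig n t < k n)%N.
Proof.
rewrite /dig /gg PPS natrM.
set y := (PP n)%:R * t.
have -> : (PP n)%:R * (k n)%:R * t = (k n)%:R * y :> R by rewrite /y; ring.
set G := Num.floor y.
have h1 : G%:~R <= y by exact: floor_le.
have h2 : y < (G + 1)%:~R by exact: floorD1_gt.
have kp : (0 : R) < (k n)%:R by rewrite ltr0n.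
have h3 : (k n)%:Z * G <= Num.floor ((k n)%:R * y).
  rewrite floor_ge_int intrM.
  by apply: (@ler_wpM2l _ (k n)%:R) => //; exact: ltW.
have h4 : Num.floor ((k n)%:R * y) < (k n)%:Z * G + (k n)%:Z.
  rewrite floor_lt_int intrD intrM.
  have -> : ((k n)%:Z)%:~R = (k n)%:R :> R by [].
  by rewrite -[X in _ < _ + X]mulr1 -mulrDr ltr_pM2l // -[1]/(1%:~R) -intrD.
set F := Num.floor _ in h3 h4 *.
have e : (absz (F - (k n)%:Z * G)%R)%:Z = F - (k n)%:Z * G by rewrite gez0_abs; lia.
split; first by rewrite e; lia.
have : (absz (F - (k n)%:Z * G)%R)%:Z < (k n)%:Z by rewrite e; lia.
lia.
Qed.

Lemma gg_down n t s : gg n.+1 t = gg n.+1 s -> gg n t = gg n s /\ dig n t = dig n s.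
Proof.
move=> e; have [et dt] := gg_step n t; have [es ds] := gg_step n s.
have kp := hk0 n.
have [] := @euclid_uniq (k n)%:Z (gg n t) (gg n s) (dig n t)%:Z (dig n s)%:Z.
- lia.
- apply/andP; split; lia.
- apply/andP; split; lia.
- by rewrite -et -es.
by move=> -> [].
Qed.

Lemma gg_downs j i t s : gg (i + j) t = gg (i + j) s -> gg i t = gg i s.
Proof.
elim: j => [|j IH]; first by rewrite addn0.
by rewrite addnS => /gg_down [] /IH.
Qed.

Lemma mm : m = m.-2.+2.
Proof. by case: m hm => [|[|]]. Qed.

Lemma ff_val n t : val (ff t n) = dig n t.
Proof.
rewrite /ff; apply: inordK; have [_ h] := gg_step n t; rewrite -mm.
exact: leq_trans h (hkm n).
Qed.

Lemma ff_agree n t s : gg n t = gg n s -> forall i, (i < n)%N -> ff t i = ff s i.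
Proof.
move=> e i ltin; apply: val_inj => /=; rewrite !ff_val.
have : gg (i.+1 + (n - i.+1)) t = gg (i.+1 + (n - i.+1)) s by rewrite subnKC.
by move/gg_downs/gg_down => [].
Qed.

Definition SS : set (seqT m) := [set x | forall i, (nat_of_ord (x i) < k i)%N].

Fixpoint cc (x : seqT m) n : int := match n with
  | 0 => 0 | n'.+1 => (k n')%:Z * cc x n' + (nat_of_ord (x n'))%:Z end.

Lemma cc_bound x : SS x -> forall n, 0 <= cc x n /\ cc x n < (PP n)%:Z.
Proof.
move=> Sx; elim => [|n [IH1 IH2]] /=; first by rewrite /PP big_ord0.
have kp := hk0 n; have xk := Sx n.
have h1 : (k n)%:Z * cc x n <= (k n)%:Z * ((PP n)%:Z - 1).
  by rewrite ler_pM2l; [lia|lia].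
have h0 : 0 <= (k n)%:Z * cc x n by apply: mulr_ge0; lia.
rewrite mulrBr mulr1 in h1.
rewrite PPS PoszM [X in _ < X]mulrC; split; lia.
Qed.

Lemma prefix n x t : SS x -> gg 0 t = 0 ->
  ((forall i, (i < n)%N -> ff t i = x i) <-> gg n t = cc x n).
Proof.
move=> Sx g0; elim: n => [|n IH] /=; first by split.
have [et dk] := gg_step n t.
split.
- move=> h; rewrite et (proj1 IH) => [|i lt]; last by apply: h; exact: ltnW.
  by rewrite -ff_val h.
- move=> e; rewrite et in e.
  have [] := @euclid_uniq (k n)%:Z (gg n t) (cc x n) (dig n t)%:Z (nat_of_ord (x n))%:Z.
  + have := hk0 n; lia.
  + apply/andP; split; lia.
  + have := Sx n; move=> ?; apply/andP; split; lia.
  + exact: e.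
  move=> /(proj2 IH) h1 h2 i; rewrite ltnS leq_eqVlt => /orP [/eqP ->|]; last exact: h1.
  by apply: val_inj; rewrite /= ff_val; case: h2.
Qed.


Lemma PP_gt0R n : (0 : R) < (PP n)%:R.
Proof. by rewrite ltr0n PP_gt0. Qed.

Lemma gg_set n c : [set t : R | gg n t = c] =
  `[c%:~R / (PP n)%:R, (c + 1)%:~R / (PP n)%:R[%classic.
Proof.
rewrite predeqE => t /=; rewrite in_itv /= ler_pdivrMr ?PP_gt0R //.
rewrite ltr_pdivlMr ?PP_gt0R // [t * _]mulrC /gg.
split; first by move=> <-; exact: floor_itv.
by move=> h; apply/eqP; rewrite floor_eq.
Qed.

Lemma gg0 t : `[0, 1[%classic t -> gg 0 t = 0.
Proof.
rewrite /= in_itv /= /gg /PP big_ord0 mul1r => h; apply/eqP; rewrite floor_eq.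
by rewrite add0r.
Qed.

Lemma ball_pre n x : SS x ->
  (ff @^-1` Bn n x) `&` `[0, 1[%classic = [set t : R | gg n t = cc x n].
Proof.
move=> Sx; rewrite predeqE => t; split.
  by move=> [h /gg0 g0]; exact: (proj1 (prefix _ _ _ Sx g0) h).
move=> e.
have [c0 cP] := cc_bound _ Sx n.
have ht : `[0, 1[%classic t.
  have : [set t | gg n t = cc x n] t by []. rewrite gg_set /= !in_itv /=.
  move=> /andP[h1 h2]; apply/andP; split.
    apply: le_trans h1; apply: divr_ge0; [by rewrite ler0z|exact: ltW (PP_gt0R n)].
  apply: (lt_le_trans h2); rewrite ler_pdivrMr ?PP_gt0R // mul1r.
  have : cc x n + 1 <= (PP n)%:Z by lia.
  by rewrite -(ler_int R).
by split => //; exact: (proj2 (prefix _ _ _ Sx (gg0 _ ht)) e).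
Qed.


Lemma Bn_ff_eq n t s : gg n t = gg n s -> Bn n (ff t) = Bn n (ff s).
Proof.
move=> e; rewrite predeqE => y /=; split => h i lt.
  by rewrite h // (ff_agree _ _ _ e).
by rewrite h // (ff_agree _ _ _ e).
Qed.

Definition ffb : R -> borelT m := ff.

Lemma ff_meas : measurable_fun setT ffb.
Proof.
apply: (@measurability _ _ R (borelT m) setT ffb (@Defs.openT m)) => //.
move=> _ [U oU <-]; rewrite setTI.
have -> : ffb @^-1` U =
    \bigcup_n \bigcup_(c : int) [set t | gg n t = c /\ Bn n (ff t) `<=` U].
  rewrite predeqE => t; split.
    move=> /oU [n hn]; exists n => //; exists (gg n t) => //.
  by move=> [n _ [c _ [_ h]]]; apply: h => i _.
apply: bigcupT_measurable => n; apply: countable_bigcupT_measurable => // c.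
have [[t0 [e0 h0]]|nE] := pselect (exists t0, gg n t0 = c /\ Bn n (ff t0) `<=` U).
  have -> : [set t | gg n t = c /\ Bn n (ff t) `<=` U] = [set t | gg n t = c].
    rewrite predeqE => t; split => [[]//|e]; split => //.
    by rewrite (Bn_ff_eq _ _ _ (etrans e (esym e0))).
  rewrite gg_set; exact: measurable_itv.
have -> : [set t | gg n t = c /\ Bn n (ff t) `<=` U] = set0.
  by rewrite predeqE => t; split => // h; apply: nE; exists t.
exact: measurable0.
Qed.

Lemma SSC_open : @Defs.openT m (~` SS).
Proof.
move=> x /= nS; have [i hi] : exists i, ~ (nat_of_ord (x i) < k i)%N.
  by apply: contrapT => H; apply: nS => i; apply: contrapT => Hi; apply: H; exists i.
exists i.+1 => y h Sy; apply: hi; rewrite -(h i (ltnSn i)); exact: Sy.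
Qed.

Lemma SS_meas : measurable (SS : set (borelT m)).
Proof.
rewrite -[SS]setCK; apply: measurableC; apply: sub_sigma_algebra; exact: SSC_open.
Qed.

Lemma ff_SS t : SS (ff t).
Proof. move=> i; have := ff_val i t; rewrite /= => ->; exact: (proj2 (gg_step i t)). Qed.

End Gen.

Local Open Scope ereal_scope.

Section Main.
Variables (R : realType) (m : nat) (alpha : R).
Hypothesis hm : (2 <= m)%N.
Hypothesis ha : (0 < alpha < 1)%R.

Definition aa : R := m%:R `^ alpha.
Definition lo : nat := absz (Num.floor aa).
Definition hi : nat := absz (Num.ceil aa).

Lemma aa_ge1 : (1 <= aa)%R.
Proof.
rewrite /aa -[X in (X <= _)%R](powRr0 m%:R); apply: ler_powR.
  by rewrite ler1n; apply: ltnW.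
by case/andP: ha => /ltW.
Qed.

Lemma aa_lem : (aa <= m%:R)%R.
Proof.
rewrite /aa -[X in (_ <= X)%R](@powRr1 _ m%:R) //; apply: ler_powR.
  by rewrite ler1n; apply: ltnW.
by case/andP: ha => _ /ltW.
Qed.

Lemma loZ : (lo%:Z = Num.floor aa)%R.
Proof. rewrite /lo gez0_abs // floor_ge0; apply: le_trans aa_ge1; exact: ler01. Qed.

Lemma hiZ : (hi%:Z = Num.ceil aa)%R.
Proof.
rewrite /hi gez0_abs //; apply: le_trans (le_ceil aa_ge1); by rewrite ceil1.
Qed.

Lemma lo_ge1 : (1 <= lo)%N.
Proof.
have : (1 <= Num.floor aa)%R by rewrite floor_ge_int aa_ge1.
by rewrite -loZ.
Qed.

Lemma lo_le : (lo%:R <= aa)%R.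
Proof. by rewrite -[lo%:R]/((lo%:Z)%:~R) loZ floor_le. Qed.

Lemma hi_ge : (aa <= hi%:R)%R.
Proof. by rewrite -[hi%:R]/((hi%:Z)%:~R) hiZ ceil_ge. Qed.

Lemma hi_lem : (hi <= m)%N.
Proof.
have : (Num.ceil aa <= m%:Z)%R by rewrite ceil_le_int aa_lem.
by rewrite -hiZ.
Qed.

Lemma lo_le_hi : (lo <= hi)%N.
Proof. by rewrite -(ler_nat R); exact: le_trans lo_le hi_ge. Qed.


Fixpoint Pg n : nat := if n is n'.+1 then
  (Pg n' * (if ((Pg n')%:R <= aa ^+ n')%R then hi else lo))%N else 1%N.

Definition kk n : nat := if ((Pg n)%:R <= aa ^+ n)%R then hi else lo.

Lemma PP_Pg n : PP kk n = Pg n.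
Proof. elim: n => [|n IH]; first by rewrite /PP big_ord0. by rewrite PPS IH. Qed.

Lemma kk_gt0 i : (0 < kk i)%N.
Proof. rewrite /kk; case: ifP => _; last exact: lo_ge1. exact: leq_trans lo_ge1 lo_le_hi. Qed.

Lemma kk_lem i : (kk i <= m)%N.
Proof. rewrite /kk; case: ifP => _; first exact: hi_lem. exact: leq_trans lo_le_hi hi_lem. Qed.

Lemma Pg_bound n : (lo%:R * aa ^+ n <= aa * (Pg n)%:R <= hi%:R * aa ^+ n)%R.
Proof.
have a0 : (0 <= aa)%R by apply: le_trans aa_ge1; exact: ler01.
elim: n => [|n /andP[IH1 IH2]]; first by rewrite /= !mulr1 lo_le hi_ge.
rewrite /= natrM exprS.
set A := (aa ^+ n)%R in IH1 IH2 *; set P := ((Pg n)%:R : R) in IH1 IH2 *.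
have P0 : (0 <= P)%R by rewrite /P ler0n.
have A0 : (0 <= A)%R by rewrite /A exprn_ge0.
have aP0 : (0 <= aa * P)%R by rewrite mulr_ge0.
have aA0 : (0 <= aa * A)%R by rewrite mulr_ge0.
have hl := hi_ge; have ll := lo_le.
have lo0 : (0 <= lo%:R :> R)%R by rewrite ler0n.
case: ifP => h.
- have e1 := ler_wpM2l a0 IH1; have e2 := ler_wpM2r aP0 hl.
  have hr : (P <= A)%R by [].
  have e3 := ler_wpM2l (mulr_ge0 (ler0n R hi) a0) hr.
  apply/andP; split; nra.
- have h' : (A <= P)%R by apply/ltW; rewrite ltNge h.
  have e1 := ler_wpM2l a0 IH2; have e2 := ler_wpM2r aP0 ll.
  have e3 := ler_wpM2l (mulr_ge0 lo0 a0) h'.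
  apply/andP; split; nra.
Qed.


Definition mD01 : measurable (`[0%R, 1%R[%classic : set R) := measurable_itv _.
Local Notation mu0 := (mrestr (@lebesgue_measure R) mD01).
Definition muT (A : set (borelT m)) : \bar R := mu0 (@ffb R m kk @^-1` A).

Lemma mfT : measurable_fun setT (@ffb R m kk).
Proof. exact: (@ff_meas R m kk hm kk_gt0 kk_lem). Qed.

Let muT0 : muT set0 = 0.
Proof. by rewrite /muT preimage_set0 measure0. Qed.

Let muT_ge0 A : 0 <= muT A.
Proof. by apply: measure_ge0; rewrite -[X in measurable X]setIT; apply: mfT. Qed.

Let muT_sa : semi_sigma_additive muT.
Proof.
move=> F mF tF mUF; rewrite /muT preimage_bigcup.
apply: measure_semi_sigma_additive.
- by move=> n; rewrite -[X in measurable X]setTI; exact: mfT.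
- apply/trivIsetP => /= i j _ _ ij; rewrite -preimage_setI.
  by move/trivIsetP : tF => /(_ _ _ _ _ ij) ->//; rewrite preimage_set0.
- by rewrite -preimage_bigcup -[X in measurable X]setTI; exact: mfT.
Qed.

HB.instance Definition _ := isMeasure.Build _ _ _ muT muT0 muT_ge0 muT_sa.


Lemma muT_setT : muT setT = 1.
Proof.
rewrite /muT preimage_setT /mrestr setTI lebesgue_measure_itv /=.
by rewrite lte_fin ltr01 oppr0 adde0.
Qed.

Lemma muT_ball n x : @SS m kk x -> muT (Bn n x) = ((Pg n)%:R^-1)%:E.
Proof.
move=> Sx; rewrite /muT /mrestr.
have := @ball_pre R m kk hm kk_gt0 kk_lem n x Sx; rewrite /ffb => ->.
rewrite gg_set; last exact: kk_gt0.
set c := cc m kk x n. set P := PP kk n.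
have := @lebesgue_measure_itv R `[(c%:~R / P%:R)%R, ((c + 1)%:~R / P%:R)%R[.
move=> -> /=.
have P0 : (0 < P%:R :> R)%R by rewrite ltr0n /P PP_gt0 //; exact: kk_gt0.
rewrite lte_fin ltr_pM2r ?invr_gt0 // ltr_int ltzD1 lexx -EFinB.
by rewrite intrD mulrDl addrAC subrr add0r mul1r /P PP_Pg.
Qed.


Lemma muT_SSC : muT (~` @SS m kk) = 0.
Proof.
rewrite /muT (_ : _ @^-1` _ = set0) ?measure0 //.
rewrite predeqE => t; split => // /= h; apply: h; exact: (@ff_SS R m kk hm kk_gt0 kk_lem t).
Qed.

Lemma aeS (P : borelT m -> Prop) : (forall x, @SS m kk x -> P x) -> \forall x \ae muT, P x.
Proof.
move=> h; exists (~` @SS m kk); split.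
- apply: measurableC; exact: SS_meas.
- exact: muT_SSC.
- by move=> x /= nP Sx; apply: nP; exact: h.
Qed.

Lemma aa_gt0 : (0 < aa)%R. Proof. apply: lt_le_trans aa_ge1; exact: ltr01. Qed.
Lemma lo_gt0 : (0 < lo%:R :> R)%R. Proof. by rewrite ltr0n lo_ge1. Qed.
Lemma hi_gt0 : (0 < hi%:R :> R)%R. Proof. by rewrite ltr0n (leq_trans lo_ge1 lo_le_hi). Qed.
Lemma Pg_gt0 n : (0 < (Pg n)%:R :> R)%R.
Proof. rewrite -PP_Pg ltr0n PP_gt0 //; exact: kk_gt0. Qed.

Lemma term_eq n x : @SS m kk x ->
  (m%:R `^ (alpha * n%:R))%:E * muT (Bn n x) = (aa ^+ n / (Pg n)%:R)%:E.
Proof. by move=> Sx; rewrite muT_ball // powRrM powR_mulrn ?powR_ge0 // -EFinM. Qed.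

Lemma term_bounds n : (aa / hi%:R <= aa ^+ n / (Pg n)%:R <= aa / lo%:R)%R.
Proof.
have /andP[h1 h2] := Pg_bound n.
apply/andP; split.
  rewrite ler_pdivlMr ?Pg_gt0 // mulrAC ler_pdivrMr ?hi_gt0 //.
  by rewrite [X in (_ <= X)%R]mulrC.
rewrite ler_pdivrMr ?Pg_gt0 // mulrAC ler_pdivlMr ?lo_gt0 //.
by rewrite [X in (X <= _)%R]mulrC.
Qed.

Lemma Theta_up_le x : @SS m kk x -> Theta_up muT alpha x <= (aa / lo%:R)%:E.
Proof.
move=> Sx; rewrite /Theta_up limn_esup_lim; apply: lime_le; first exact: is_cvg_esups.
apply: nearW => n; apply: ge_ereal_sup => _ [j _ <-].
by rewrite term_eq // lee_fin; case/andP: (term_bounds j).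
Qed.

Lemma Theta_low_ge x : @SS m kk x -> (aa / hi%:R)%:E <= Theta_low muT alpha x.
Proof.
move=> Sx; rewrite /Theta_low limn_einf_lim; apply: lime_ge; first exact: is_cvg_einfs.
apply: nearW => n; apply: le_ereal_inf_tmp => _ [j _ <-].
by rewrite term_eq // lee_fin; case/andP: (term_bounds j).
Qed.

Lemma Theta_low_up x : Theta_low muT alpha x <= Theta_up muT alpha x.
Proof. exact: limn_einf_sup. Qed.


Lemma ratio_key (e1 e2 : \bar R) (A B : R) : (0 < A)%R ->
  A%:E <= e1 <= B%:E -> A%:E <= e2 <= B%:E -> (fine e1 / fine e2 <= B / A)%R.
Proof.
move=> A0; case: e1 => [e1||] /andP[]; rewrite ?leey ?leNye ?lee_fin //.
all: try (by rewrite leye_eq).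
all: try (by move=> /le_trans H /H; rewrite leeNy_eq).
move=> h1 h2.
case: e2 => [e2||] /andP[]; rewrite ?leey ?leNye ?lee_fin //.
all: try (by rewrite leye_eq).
all: try (by move=> /le_trans H /H; rewrite leeNy_eq).
move=> h3 h4 /=.
have e20 : (0 < e2)%R by apply: lt_le_trans h3.
have B0 : (0 < B)%R by apply: lt_le_trans A0 (le_trans h1 h2).
rewrite (@ler_pdivrMr _ e2) //.
apply: (le_trans h2).
have hB : B = (B / A * A)%R by rewrite mulfVK // gt_eqF.
rewrite [X in (X <= _)%R]hB.
apply: ler_wpM2l => //.
by rewrite ltW // divr_gt0.
Qed.

Theorem theorem2_aux :
  exists mu : {measure set (borelT m) -> \bar R},
    [/\ (0 < mu setT)%E, (mu setT < +oo)%E,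
        (ess_sup mu (Theta_up mu alpha) < +oo)%E,
        (0 < ess_inf mu (Theta_low mu alpha))%E &
        (Cratio mu alpha <=
          (Num.ceil (m%:R `^ alpha))%:~R / (Num.floor (m%:R `^ alpha))%:~R)%R].
Proof.
exists (muT : {measure set (borelT m) -> \bar R}).
have mT : muT setT = 1 := muT_setT.
have pos : 0 < muT setT by rewrite mT lte01.
have B1 : (aa / hi%:R)%:E <= ess_sup muT (Theta_up muT alpha) <= (aa / lo%:R)%:E.
  apply/andP; split.
    apply: ess_sup_gee => //; apply: aeS => x Sx.
    exact: le_trans (Theta_low_ge x Sx) (Theta_low_up x).
  by apply/ess_supP; apply: aeS => x Sx; exact: Theta_up_le.
have B2 : (aa / hi%:R)%:E <= ess_inf muT (Theta_low muT alpha) <= (aa / lo%:R)%:E.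
  apply/andP; split.
    by apply/ess_infP; apply: aeS => x Sx; exact: Theta_low_ge.
  rewrite -(ess_inf_cst (mu := muT) (aa / lo%:R)%:E) //; apply: le_ess_inf.
  apply: aeS => x Sx; exact: le_trans (Theta_low_up x) (Theta_up_le x Sx).
have A0 : (0 < aa / hi%:R)%R by rewrite divr_gt0 ?aa_gt0 ?hi_gt0.
split.
- exact: pos.
- by have : muT setT < +oo by rewrite mT ltry.
- by case/andP: B1 => _ /le_lt_trans; apply; rewrite ltry.
- by case/andP: B2 => h _; apply: lt_le_trans h; rewrite lte_fin.
- rewrite /Cratio.
  apply: (le_trans (ratio_key _ _ _ _ A0 B1 B2)).

  rewrite -/aa -hiZ -loZ /=.
  have := aa_gt0; have := hi_gt0; have := lo_gt0.
  move=> l0 h0 a0; rewrite le_eqVlt; apply/orP; left; apply/eqP.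
  field; rewrite ?gt_eqF //.
Qed.

End Main.

Theorem theorem2 (R : realType) (m : nat) (alpha : R) :
  (2 <= m)%N -> (0 < alpha < 1)%R ->
  exists mu : {measure set (borelT m) -> \bar R},
    [/\ (0 < mu setT)%E, (mu setT < +oo)%E,
        (ess_sup mu (Theta_up mu alpha) < +oo)%E,
        (0 < ess_inf mu (Theta_low mu alpha))%E &
        (Cratio mu alpha <=
          (Num.ceil (m%:R `^ alpha))%:~R / (Num.floor (m%:R `^ alpha))%:~R)%R].
Proof. move=> hm ha; exact: theorem2_aux. Qed.
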